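(* Let $$C= \begin{pmatrix} -1& 2& 2\\ -2&1& 2\\ -2&2& 3 \end{pmatrix}.$$ For every positive integer $n$, writing $C^n(3,4,5)^\top=(x,y,z)^\top$, the inradius of the triangle with side lengths $x,y,z$ is $2n+1$.
   Context: Triples are regarded as row vectors and $\top$ denotes transpose. The triple $C^n(3,4,5)^\top$ is a primitive Pythagorean triple (positive integers $x,y,z$ with $x^2+y^2=z^2$), so the triangle is a right triangle with hypotenuse $z$. *)

(* Defs.v *)
From mathcomp Require Import all_boot all_order all_algebra.
Set Implicit Arguments. Unset Strict Implicit. Unset Printing Implicit Defensive.
Import Order.TTheory GRing.Theory Num.Theory.
Local Open Scope ring_scope.

Definition Cmat : 'M[int]_3 :=
  \matrix_(i < 3, j < 3)
    nth 0 (nth [::] [:: [:: -1; 2; 2]; [:: -2; 1; 2]; [:: -2; 2; 3]] i) j.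

Definition v345 : 'cV[int]_3 := \col_(i < 3) nth 0 [:: 3; 4; 5] i.

Definition semiper (R : rcfType) (a b c : R) : R := (a + b + c) / 2.
Definition area (R : rcfType) (a b c : R) : R :=
  let s := semiper a b c in Num.sqrt (s * (s - a) * (s - b) * (s - c)).
Definition inradius (R : rcfType) (a b c : R) : R := area a b c / semiper a b c.

(* Main.v *)
Require Import Defs.
From mathcomp Require Import all_boot all_order all_algebra.
From mathcomp Require Import ring lra zify.
Import Order.TTheory GRing.Theory Num.Theory.
Local Open Scope ring_scope.

Definition fx (n : nat) : int := (4 * n ^ 2 + 8 * n + 3)%:Z.
Definition fy (n : nat) : int := (4 * n + 4)%:Z.
Definition fz (n : nat) : int := (4 * n ^ 2 + 8 * n + 5)%:Z.
Definition fv (n : nat) : 'cV[int]_3 := \col_(i < 3) nth 0 [:: fx n; fy n; fz n] i.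

Lemma step n : Cmat *m fv n = fv n.+1.
Proof.
apply/matrixP => i j; rewrite !mxE !big_ord_recr big_ord0 /= !mxE /=.
rewrite /fx /fy /fz.
case: i => [[|[|[|i]]] Hi] //=; rewrite ?mxE /=; lia.
Qed.

Lemma wE n : Cmat ^+ n *m v345 = fv n.
Proof.
elim: n => [|n IH].
  rewrite expr0 mul1mx; apply/matrixP => i j; rewrite !mxE /fx /fy /fz.
  by case: i => [[|[|[|i]]] Hi].
by rewrite exprS -mulmxA IH step.
Qed.

Lemma inr_right (R : rcfType) (x y z : R) : 0 <= x -> 0 <= y -> 0 < x + y + z ->
  x ^+ 2 + y ^+ 2 = z ^+ 2 -> inradius x y z = (x + y - z) / 2.
Proof.
move=> hx hy hs hp; rewrite /inradius /area /semiper.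
have -> : (x + y + z) / 2 * ((x + y + z) / 2 - x) * ((x + y + z) / 2 - y) *
  ((x + y + z) / 2 - z) = (x * y / 2) ^+ 2.
  have e : z ^+ 2 = x ^+ 2 + y ^+ 2 by rewrite hp.
  apply/eqP; rewrite -subr_eq0.
  have -> : (x + y + z) / 2 * ((x + y + z) / 2 - x) * ((x + y + z) / 2 - y) *
  ((x + y + z) / 2 - z) - (x * y / 2) ^+ 2 = ((x + y) ^+ 2 - z ^+ 2) * (z ^+ 2 - (y - x) ^+ 2) / 16 - (x * y / 2) ^+ 2 by field.
  by rewrite e; apply/eqP; field.
have hxy : 0 <= x * y / 2 by apply: divr_ge0 => //; apply: mulr_ge0.
rewrite [Num.sqrt _](_ : _ = x * y / 2); last exact: (etrans (sqrtr_sqr _) (ger0_norm hxy)).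
have hs' : (x + y + z) / 2 != 0 by apply/lt0r_neq0; apply: divr_gt0.
apply: (mulIf hs'); rewrite divfK //.
have e : z ^+ 2 = x ^+ 2 + y ^+ 2 by rewrite hp.
have -> : (x + y - z) / 2 * ((x + y + z) / 2) = ((x + y) ^+ 2 - z ^+ 2) / 4 by field.
by rewrite e; field.
Qed.

Theorem mainTheorem5 (R : rcfType) (n : nat) : (0 < n)%N ->
  let w := Cmat ^+ n *m v345 in
  inradius ((w 0 0)%:~R : R) ((w 1 0)%:~R) ((w 2 0)%:~R) = (2 * n + 1)%:R.
Proof.
move=> _ w; rewrite /w wE !mxE /= /fx /fy /fz.
set m : R := n%:R.
rewrite -!pmulrn !natrD !natrM -/m.
have m0 : 0 <= m by rewrite /m ler0n.
rewrite inr_right; [by field| nra | nra | nra | ring].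
Qed.
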